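(* Let $\lambda\neq0$, $u_0$ smooth and $1$-periodic with $M_0=\max u_0'>0$ attained at the points $\overline\alpha_i$ and $m_0=\min u_0'<0$ attained at the points $\underline\alpha_j$. Let $\eta_*=1/(\lambda M_0)$ if $\lambda>0$ and $\eta_*=1/(\lambda m_0)$ if $\lambda<0$. Then $1-\lambda\eta u_0'(\alpha)>0$ for all $\eta\in[0,\eta_* )$ and $\alpha\in[0,1]$, and for the solution $u$ of $u_{xt}+uu_{xx}-\lambda u_x^2=-(\lambda+1)\int_0^1u_x^2\,dx$, $u(x,0)=u_0$ (periodic), at every time $t$ with $\eta(t)\in[0,\eta_* )$ one has, for all $i,j$, $$M(t)=u_x(\gamma(\overline\alpha_i,t),t),\qquad m(t)=u_x(\gamma(\underline\alpha_j,t),t),$$ and $u_x(\gamma(\alpha_1,t),t)=u_x(\gamma(\alpha_2,t),t)$ if and only if $u_0'(\alpha_1)=u_0'(\alpha_2)$.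
   Context: $\gamma$ is the characteristic: $\dot\gamma=u(\gamma,t)$, $\gamma(\alpha,0)=\alpha$. $M(t)=\sup_\alpha u_x(\gamma(\alpha,t),t)$, $m(t)=\inf_\alpha u_x(\gamma(\alpha,t),t)$. $\eta(t)$ solves $\dot\eta=\left(\int_0^1(1-\lambda\eta u_0'(\alpha))^{-1/\lambda}d\alpha\right)^{-2\lambda}$, $\eta(0)=0$, and along characteristics $u_x(\gamma(\alpha,t),t)=\frac{1}{\lambda\eta\bar{\mathcal K}_0^{2\lambda}}\left(\frac1{\mathcal J}-\frac{\bar{\mathcal K}_1}{\bar{\mathcal K}_0}\right)$ with $\mathcal J(\alpha,t)=1-\lambda\eta(t)u_0'(\alpha)$, $\bar{\mathcal K}_i(t)=\int_0^1\mathcal J^{-i-1/\lambda}d\alpha$. *)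

(* Defs.v *)
From Stdlib Require Import Reals Lra.
Open Scope R_scope.

Definition smooth_with_deriv (f df : R -> R) : Prop :=
  exists D : nat -> R -> R,
    D 0%nat = f /\ D 1%nat = df /\
    forall (n : nat) (x : R), derivable_pt_lim (D n) x (D (S n) x).

Definition is_glb (E : R -> Prop) (m : R) : Prop :=
  (forall x, E x -> m <= x) /\ (forall b, (forall x, E x -> b <= x) -> b <= m).

Definition eta_star (lam M0 m0 : R) : R :=
  if Rlt_dec 0 lam then / (lam * M0) else / (lam * m0).

Definition Jf (lam : R) (du0 : R -> R) (eta a : R) : R := 1 - lam * eta * du0 a.

(* Main.v *)
Require Import Defs.
From Stdlib Require Import Reals.
Open Scope R_scope.


From Stdlib Require Import Lra FunctionalExtensionality.

Lemma J_pos (lam M0 m0 e : R) (du0 : R -> R) :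
  lam <> 0 -> (forall a, du0 a <= M0) -> 0 < M0 ->
  (forall a, m0 <= du0 a) -> m0 < 0 ->
  0 <= e < eta_star lam M0 m0 -> forall a, 0 < 1 - lam * e * du0 a.
Proof.
  intros Hl HM HMp Hm Hmn [He0 He] a. unfold eta_star in He.
  destruct (Rlt_dec 0 lam) as [Hp|Hn].
  - assert (H1 : e * (lam * M0) < 1).
    { replace 1 with (/ (lam * M0) * (lam * M0)) by (field; lra).
      apply Rmult_lt_compat_r; [apply Rmult_lt_0_compat; lra| exact He]. }
    assert (H2 : lam * e * du0 a <= lam * e * M0).
    { apply Rmult_le_compat_l; [apply Rmult_le_pos; lra | apply HM]. }
    lra.
  - assert (Hn' : lam < 0) by lra.
    assert (Hp2 : 0 < lam * m0) by nra.
    assert (H1 : e * (lam * m0) < 1).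
    { replace 1 with (/ (lam * m0) * (lam * m0)) by (field; lra).
      apply Rmult_lt_compat_r; [exact Hp2| exact He]. }
    assert (H2 : lam * e * du0 a <= lam * e * m0).
    { apply Rmult_le_compat_neg_l; [nra | apply Hm]. }
    lra.
Qed.

Lemma final_props (g : R -> R) (du0 : R -> R) (M0 m0 : R) :
  (forall a b, du0 a < du0 b -> g a < g b) ->
  (forall a b, du0 a = du0 b -> g a = g b) ->
  (forall a, du0 a <= M0) -> (forall a, m0 <= du0 a) ->
  (forall abar, du0 abar = M0 ->
        is_lub (fun y => exists a, y = g a) (g abar)) /\
  (forall aund, du0 aund = m0 ->
        is_glb (fun y => exists a, y = g a) (g aund)) /\
  (forall a1 a2, g a1 = g a2 <-> du0 a1 = du0 a2).
Proof.
  intros Hlt Heq HM Hm. split; [|split].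
  - intros ab Hab. split.
    + intros y [a ->]. destruct (Rle_lt_or_eq_dec _ _ (HM a)) as [h|h].
      * left. apply Hlt. lra.
      * right. apply Heq. lra.
    + intros b Hb. apply Hb. eauto.
  - intros ab Hab. split.
    + intros y [a ->]. destruct (Rle_lt_or_eq_dec _ _ (Hm a)) as [h|h].
      * left. apply Hlt. lra.
      * right. apply Heq. lra.
    + intros b Hb. apply Hb. eauto.
  - intros a1 a2. split; [|apply Heq]. intros E.
    destruct (Rtotal_order (du0 a1) (du0 a2)) as [h|[h|h]]; auto.
    + apply Hlt in h. lra.
    + apply Hlt in h. lra.
Qed.

Theorem mainTheorem8
  (lam : R) (u0 du0 : R -> R) (M0 m0 : R)
  (u ux uxx uxt : R -> R -> R) (gam : R -> R -> R) (eta K0 K1 : R -> R) (T : R)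
  (* data *)
  (Hlam : lam <> 0)
  (Hu0 : smooth_with_deriv u0 du0)
  (Hper0 : forall x, u0 (x + 1) = u0 x)
  (HM0max : forall a, du0 a <= M0) (HM0att : exists a, du0 a = M0) (HM0pos : 0 < M0)
  (Hm0min : forall a, m0 <= du0 a) (Hm0att : exists a, du0 a = m0) (Hm0neg : m0 < 0)
  (HT : 0 < T)
  (* u solves the periodic problem on [0,T) *)
  (Hux : forall x t, 0 <= t < T -> derivable_pt_lim (fun y => u y t) x (ux x t))
  (Huxx : forall x t, 0 <= t < T -> derivable_pt_lim (fun y => ux y t) x (uxx x t))
  (Huxt : forall x t, 0 < t < T -> derivable_pt_lim (fun s => ux x s) t (uxt x t))
  (Hper : forall x t, 0 <= t < T -> u (x + 1) t = u x t)
  (Hinit : forall x, u x 0 = u0 x)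
  (Hpde : forall x t, 0 < t < T ->
     exists pr : Riemann_integrable (fun y => (ux y t) ^ 2) 0 1,
       uxt x t + u x t * uxx x t - lam * (ux x t) ^ 2 = - (lam + 1) * RiemannInt pr)
  (* characteristics *)
  (Hgam0 : forall a, gam a 0 = a)
  (Hgam : forall a t, 0 <= t < T -> derivable_pt_lim (gam a) t (u (gam a t) t))
  (* eta and the integrals K0bar, K1bar *)
  (HK0 : forall t, 0 <= t < T -> 0 <= eta t < eta_star lam M0 m0 ->
     exists pr : Riemann_integrable
       (fun a => Rpower (Jf lam du0 (eta t) a) (- (1 / lam))) 0 1,
       K0 t = RiemannInt pr)
  (HK1 : forall t, 0 <= t < T -> 0 <= eta t < eta_star lam M0 m0 ->
     exists pr : Riemann_integrable
       (fun a => Rpower (Jf lam du0 (eta t) a) (- 1 - 1 / lam)) 0 1,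
       K1 t = RiemannInt pr)
  (Heta0 : eta 0 = 0)
  (Heta : forall t, 0 <= t < T -> derivable_pt_lim eta t (Rpower (K0 t) (- (2 * lam))))
  (* representation formula along characteristics (where eta > 0) *)
  (Hrep : forall a t, 0 <= t < T -> 0 < eta t < eta_star lam M0 m0 ->
     ux (gam a t) t =
       / (lam * eta t * Rpower (K0 t) (2 * lam)) * (/ Jf lam du0 (eta t) a - K1 t / K0 t)) :
  (forall e a, 0 <= e < eta_star lam M0 m0 -> 0 <= a <= 1 -> 0 < 1 - lam * e * du0 a) /\
  (forall t, 0 <= t < T -> 0 <= eta t < eta_star lam M0 m0 ->
     (forall abar, du0 abar = M0 ->
        is_lub (fun y => exists a, y = ux (gam a t) t) (ux (gam abar t) t)) /\
     (forall aund, du0 aund = m0 ->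
        is_glb (fun y => exists a, y = ux (gam a t) t) (ux (gam aund t) t)) /\
     (forall a1 a2, ux (gam a1 t) t = ux (gam a2 t) t <-> du0 a1 = du0 a2)).
Proof.
Proof.
  assert (HJ := fun e => J_pos lam M0 m0 e du0 Hlam HM0max HM0pos Hm0min Hm0neg).
  split.
  { intros e a He _. apply (HJ e He). }
  intros t Ht He.
  apply final_props with (M0 := M0) (m0 := m0); auto.
  2:{ intros a b Hab.
      destruct (Req_dec t 0) as [->|Ht0].
      - rewrite !Hgam0.
        destruct Hu0 as [D [HD0 [HD1 HD]]].
        assert (Hu : (fun y => u y 0) = u0) by (apply functional_extensionality; apply Hinit).
        assert (HT0 : 0 <= 0 < T) by lra.
        assert (E : forall x, ux x 0 = du0 x).
        { intro x. apply (uniqueness_limite u0 x).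
          - rewrite <- Hu. apply Hux; lra.
          - rewrite <- HD0, <- HD1. apply HD. }
        rewrite !E. exact Hab.
      - assert (Hep : 0 < eta t).
        { destruct (MVT_cor2 eta (fun s => Rpower (K0 s) (- (2 * lam))) 0 t) as [c [Hc _]].
          - lra.
          - intros c Hc. apply Heta. lra.
          - rewrite Heta0 in Hc. assert (0 < Rpower (K0 c) (- (2 * lam))) by (unfold Rpower; apply exp_pos).
            nra. }
        rewrite !Hrep by lra. unfold Jf. rewrite Hab. reflexivity. }
  intros a b Hab.
  destruct (Req_dec t 0) as [->|Ht0].
  - rewrite !Hgam0.
    destruct Hu0 as [D [HD0 [HD1 HD]]].
    assert (Hu : (fun y => u y 0) = u0) by (apply functional_extensionality; apply Hinit).
    assert (E : forall x, ux x 0 = du0 x).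
    { intro x. apply (uniqueness_limite u0 x).
      - rewrite <- Hu. apply Hux; lra.
      - rewrite <- HD0, <- HD1. apply HD. }
    rewrite !E. exact Hab.
  - assert (Hep : 0 < eta t).
    { destruct (MVT_cor2 eta (fun s => Rpower (K0 s) (- (2 * lam))) 0 t) as [c [Hc _]].
      - lra.
      - intros c Hc. apply Heta. lra.
      - rewrite Heta0 in Hc. assert (0 < Rpower (K0 c) (- (2 * lam))) by (unfold Rpower; apply exp_pos).
        nra. }
    assert (He' : 0 < eta t < eta_star lam M0 m0) by lra.
    rewrite !Hrep by lra. unfold Jf.
    assert (HP : 0 < Rpower (K0 t) (2 * lam)) by (unfold Rpower; apply exp_pos).
    assert (Ja := HJ (eta t) He a). assert (Jb := HJ (eta t) He b).
    set (P := Rpower (K0 t) (2 * lam)) in *.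
    set (e := eta t) in *.
    set (K := K1 t / K0 t).
    set (x := du0 a) in *. set (y := du0 b) in *.
    assert (D : / (lam * e * P) * (/ (1 - lam * e * y) - K) - / (lam * e * P) * (/ (1 - lam * e * x) - K)
              = (y - x) / (P * (1 - lam * e * x) * (1 - lam * e * y))).
    { field. repeat split; lra. }
    assert (0 < (y - x) / (P * (1 - lam * e * x) * (1 - lam * e * y))).
    { apply Rdiv_lt_0_compat; [lra|]. repeat apply Rmult_lt_0_compat; lra. }
    lra.
Qed.
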